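(* Let $K\subseteq\mathbb{R}^{n}$ be compact, $T\subseteq\mathbb{R}^{n}$ compact with non-empty interior, $\delta>0$, and let $\Lambda(\delta)\subseteq K$ be a finite $\delta$-net for $K$. Then \[ N_{\omega}(K,T+\delta B_{2}^{n})\le N_{\omega}(K,T,\Lambda(\delta)). \]
   Context: $B_2^n$ is the closed Euclidean unit ball; a set $\Lambda$ is a $\delta$-net for $A$ if $A\subseteq\Lambda+\delta B_2^n$. $\mathbbm{1}_A$ is the indicator of $A$. $N_\omega(K,T)$ is the infimum of $\sum_i\omega_i$ over finite families $\{(x_i,\omega_i)\}$ with $x_i\in\mathbb{R}^n$, $\omega_i\ge0$, and $\sum_i\omega_i\mathbbm{1}_{T}(x-x_i)\ge1$ for all $x\in K$. For a finite set $\Lambda\subseteq\mathbb{R}^n$, $N_\omega(K,T,\Lambda)$ is the infimum of $\sum_{i}\omega_i$ over finite families $\{(x_i,\omega_i)\}$ with $x_i\in\Lambda$, $\omega_i\ge0$, such that $\sum_i\omega_i\mathbbm{1}_T(x-x_i)\ge\mathbbm{1}_K(x)$ for all $x\in\Lambda$. *)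

(* Defs.v *)
From HB Require Import structures.
From mathcomp Require Import all_boot all_order all_algebra.
From mathcomp Require Import all_classical all_reals all_analysis.
Set Implicit Arguments. Unset Strict Implicit. Unset Printing Implicit Defensive.
Import Order.TTheory GRing.Theory Num.Theory.
Import numFieldNormedType.Exports.
Local Open Scope classical_set_scope.
Local Open Scope ring_scope.

Definition enorm {R : realType} {n : nat} (x : 'rV[R]_n) : R :=
  Num.sqrt (\sum_(i < n) x ord0 i ^+ 2).

Definition ball2 (R : realType) (n : nat) : set 'rV[R]_n :=
  [set x | enorm x <= 1].

Definition enlarge {R : realType} {n : nat} (T : set 'rV[R]_n) (d : R)
  : set 'rV[R]_n :=
  [set x | exists t, exists b, T t /\ @ball2 R n b /\ x = t + d *: b].

Definition is_net {R : realType} {n : nat} (Lam : seq 'rV[R]_n) (A : set 'rV[R]_n)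
  (d : R) : Prop :=
  A `<=` enlarge [set x | x \in Lam] d.

Definition wsum {R : realType} {n : nat} (T : set 'rV[R]_n)
  (s : seq ('rV[R]_n * R)) (x : 'rV[R]_n) : R :=
  \sum_(p <- s) p.2 * \1_T (x - p.1).

Definition N_omega {R : realType} {n : nat} (K T : set 'rV[R]_n) : \bar R :=
  ereal_inf [set ((\sum_(p <- s) p.2)%:E) | s in
    [set s : seq ('rV[R]_n * R) |
       (forall p, p \in s -> 0 <= p.2) /\
       (forall x, K x -> 1 <= wsum T s x)]].

Definition N_omega_net {R : realType} {n : nat} (K T : set 'rV[R]_n)
  (Lam : seq 'rV[R]_n) : \bar R :=
  ereal_inf [set ((\sum_(p <- s) p.2)%:E) | s in
    [set s : seq ('rV[R]_n * R) |
       (forall p, p \in s -> p.1 \in Lam /\ 0 <= p.2) /\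
       (forall x, x \in Lam -> \1_K x <= wsum T s x)]].

(* Main.v *)
Require Import Defs.
From HB Require Import structures.
From mathcomp Require Import all_boot all_order all_algebra.
From mathcomp Require Import all_classical all_reals all_analysis.
Import Order.TTheory GRing.Theory Num.Theory.
Import numFieldNormedType.Exports.
Local Open Scope classical_set_scope.
Local Open Scope ring_scope.

Theorem lemma2p2 (R : realType) (n : nat) (K T : set 'rV[R]_n) (d : R)
  (Lam : seq 'rV[R]_n) :
  compact K -> compact T -> (interior T !=set0) -> 0 < d ->
  [set x | x \in Lam] `<=` K -> is_net Lam K d ->
  (N_omega K (enlarge T d) <= N_omega_net K T Lam)%E.
Proof.
move=> _ _ _ _ LK net.
apply: ereal_inf_le_tmp => _ [s [sw sK] <-]; exists s => //; split.
  by move=> p /sw [].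
move=> x Kx.
have [l [b [Ll [bb ->]]]] := net x Kx.
have Kl : K l by apply: LK.
have := sK l Ll; rewrite indicE mem_set // => /le_trans; apply.
rewrite /wsum !big_seq; apply: ler_sum => p ps /=.
have [_ p0] := sw p ps.
apply: ler_wpM2l => //.
rewrite !indicE.
case: (boolP (l - p.1 \in T)) => [/set_mem Tl|]; last by rewrite ler0n.
rewrite mem_set ?lexx //.
exists (l - p.1), b; split => //; split => //.
by rewrite addrAC.
Qed.
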